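(* Let $R$ be a commutative ring with identity and $M$ a non-zero comultiplication $R$-module with $G'(M)$ non-null. (i) $G'(M)$ has a pendent vertex (a vertex with exactly one neighbour) if and only if $|\mathrm{Min}(M)|=2$ and $G'(M)$ is the disjoint union of two complete subgraphs $G'_1,G'_2$ with no edges between them such that $|V(G'_i)|=2$ for some $i\in\{1,2\}$. (ii) $G'(M)$ is not a star graph.
   Context: An $R$-module $M$ is a comultiplication module if for every submodule $N$ of $M$ there is an ideal $I$ of $R$ with $N=\mathrm{Ann}_M(I)$. A submodule $N$ of $M$ is large if $N\cap L\neq 0$ for every non-zero submodule $L$ of $M$. $\mathrm{Min}(M)$ is the set of minimal submodules of $M$. The large sum graph $G'(M)$ has as vertex set the set of all non-zero non-large submodules of $M$, and two distinct vertices $N,K$ are adjacent iff $N+K$ is non-large in $M$. A star graph is a complete bipartite graph $K_{1,n}$ (one part of size 1). *)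

(* Defs.v *)
(* Equality of subsets is Leibniz equality. *)
From HB Require Import structures.
From mathcomp Require Import all_boot all_order all_algebra.
Set Implicit Arguments. Unset Strict Implicit. Unset Printing Implicit Defensive.
Import GRing.Theory.
Local Open Scope ring_scope.

Section ComultGraph.
Variables (R : comNzRingType) (M : lmodType R).

Definition is_submodule (N : M -> Prop) : Prop :=
  N 0 /\ (forall (a : R) (x y : M), N x -> N y -> N (a *: x + y)).

Definition is_ideal (I : R -> Prop) : Prop :=
  I 0 /\ (forall x y, I x -> I y -> I (x - y)) /\ (forall r x, I x -> I (r * x)).

Definition annM (I : R -> Prop) : M -> Prop := fun m => forall r, I r -> r *: m = 0.

Definition comultiplication_module : Prop :=
  forall N : M -> Prop, is_submodule N -> exists I, is_ideal I /\ N = annM I.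

Definition nonzero_sub (N : M -> Prop) : Prop := exists x, N x /\ x <> 0.

Definition large (N : M -> Prop) : Prop :=
  forall L : M -> Prop, is_submodule L -> nonzero_sub L -> exists x, x <> 0 /\ N x /\ L x.

Definition subsum (N K : M -> Prop) : M -> Prop :=
  fun x => exists a b, N a /\ K b /\ x = a + b.

Definition vertex (N : M -> Prop) : Prop :=
  is_submodule N /\ nonzero_sub N /\ ~ large N.

Definition adj (N K : M -> Prop) : Prop :=
  vertex N /\ vertex K /\ N <> K /\ ~ large (subsum N K).

Definition non_null : Prop := exists N K, adj N K.

Definition minimal_sub (N : M -> Prop) : Prop :=
  is_submodule N /\ nonzero_sub N /\
  (forall L : M -> Prop, is_submodule L -> nonzero_sub L -> (forall x, L x -> N x) -> L = N).

Definition two_minimal : Prop :=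
  exists N1 N2, N1 <> N2 /\ minimal_sub N1 /\ minimal_sub N2 /\
    (forall N, minimal_sub N -> N = N1 \/ N = N2).

Definition has_pendent_vertex : Prop :=
  exists v, vertex v /\ exists u, adj v u /\ (forall w, adj v w -> w = u).

Definition complete_on (A : (M -> Prop) -> Prop) : Prop :=
  forall N K, A N -> A K -> N <> K -> adj N K.

Definition has_exactly_two (A : (M -> Prop) -> Prop) : Prop :=
  exists N1 N2, N1 <> N2 /\ (forall N, A N <-> N = N1 \/ N = N2).

Definition two_complete_components : Prop :=
  exists A B : (M -> Prop) -> Prop,
    (forall N, vertex N <-> A N \/ B N) /\
    (forall N, ~ (A N /\ B N)) /\
    (exists N, A N) /\ (exists N, B N) /\
    complete_on A /\ complete_on B /\
    (forall N K, A N -> B K -> ~ adj N K) /\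
    (has_exactly_two A \/ has_exactly_two B).

Definition star_graph : Prop :=
  exists c, vertex c /\ (forall N, vertex N -> N <> c -> adj c N) /\
    (forall N K, adj N K -> N = c \/ K = c).

End ComultGraph.

(* Main.v *)
Require Import Defs.
From HB Require Import structures.
From mathcomp Require Import all_boot all_order all_algebra.
From mathcomp Require Import ring.
From mathcomp Require Import classical_sets.
From Stdlib Require Import Classical FunctionalExtensionality PropExtensionality.
Import GRing.Theory.
Local Open Scope ring_scope.
Set Implicit Arguments. Unset Strict Implicit. Unset Printing Implicit Defensive.

Section MaxIdeal.
Variable R : comNzRingType.

Definition Pid (I J : R -> Prop) : Prop :=
  (forall a b, J a -> J b -> J (a + b)) /\ (forall r a, J a -> J (r * a)) /\ ~ J 1 /\
  (forall x y, I x -> J y -> J (x + y)).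

Lemma exists_max (I : R -> Prop) :
  (forall a b, I a -> I b -> I (a + b)) -> (forall r a, I a -> I (r * a)) -> I 0 -> ~ I 1 ->
  exists A : R -> Prop, (forall a, I a -> A a) /\ (forall a b, A a -> A b -> A (a + b)) /\
    (forall r a, A a -> A (r * a)) /\ ~ A 1 /\ (forall c, ~ A c -> exists d, A (d * c - 1)).
Proof.
move=> Iadd Iscal I0 I1.
have [A [PA Amax]] : exists A, Pid I A /\ forall B, (A `<` B)%classic -> ~ Pid I B.
  apply: Zorn_bigcup => F FP Ftot.
  split; [|split; [|split]].
  - move=> a b [J1 FJ1 J1a] [J2 FJ2 J2b].
    have [s12|s21] := Ftot _ _ FJ1 FJ2.
    + exists J2 => //; have [+ _] := FP _ FJ2; apply => //; exact: s12.
    + exists J1 => //; have [+ _] := FP _ FJ1; apply => //; exact: s21.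
  - move=> r a [J FJ Ja]; exists J => //; have [_ [+ _]] := FP _ FJ; exact.
  - by move=> [J FJ J1]; have [_ [_ [+ _]]] := FP _ FJ; apply.
  - move=> x y Ix [J FJ Jy]; exists J => //; have [_ [_ [_ +]]] := FP _ FJ; exact.
have [Aadd [Ascal [A1 AI]]] := PA.
have [a0 Aa0] : exists a, A a.
  apply: NNPP => nA.
  apply: (Amax I); last by split.
  split; first by move=> x Ax; exfalso; apply: nA; exists x.
  by move=> sub; apply: nA; exists 0; apply: sub.
have A0 : A 0 by rewrite -(mul0r a0); apply: Ascal.
have AI' : forall a, I a -> A a by move=> a Ia; rewrite -(addr0 a); apply: AI.
exists A; split => //; split => //; split => //; split => // c nAc.
pose B := fun z => exists a d, A a /\ z = a + d * c.
have hAB : (A `<` B)%classic.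
  split; first by move=> a Aa; exists a, 0; split => //; rewrite mul0r addr0.
  move=> sub; apply: nAc; apply: sub; exists 0, 1; split => //; by rewrite mul1r add0r.
have B1 : B 1.
  apply: NNPP => nB1; apply: (Amax B hAB); split; [|split; [|split]] => //.
  - move=> _ _ [a1 [d1 [Aa1 ->]]] [a2 [d2 [Aa2 ->]]].
    exists (a1 + a2), (d1 + d2); split; first exact: Aadd.
    ring.
  - move=> r _ [a [d [Aa ->]]]; exists (r * a), (r * d); split; first exact: Ascal.
    ring.
  - move=> x _ Ix [a [d [Aa ->]]]; exists (x + a), d; split; first exact: AI.
    ring.
have [a [d [Aa e1]]] := B1.
exists d.
have -> : d * c - 1 = (-1) * a by rewrite [in LHS]e1; ring.
exact: Ascal.
Qed.

End MaxIdeal.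

Section Basics.
Variables (R : comNzRingType) (M : lmodType R).
Implicit Types (N K L X Y : M -> Prop) (x y z : M).

Definition msub (N K : M -> Prop) := forall x, N x -> K x.
Definition meets0 (N K : M -> Prop) := forall z, N z -> K z -> z = 0.
Definition cyc (x : M) : M -> Prop := fun z => exists c, z = c *: x.
Definition cap (N K : M -> Prop) : M -> Prop := fun z => N z /\ K z.
Definition kills (r : R) (N : M -> Prop) := forall z, N z -> r *: z = 0.

Lemma pred_ext (P Q : M -> Prop) : (forall x, P x <-> Q x) -> P = Q.
Proof.
move=> h; apply: functional_extensionality => x.
by apply: propositional_extensionality; apply: h.
Qed.

Lemma antisym N K : msub N K -> msub K N -> N = K.
Proof. by move=> h1 h2; apply: pred_ext => x; split; [apply: h1|apply: h2]. Qed.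

Lemma eq_msub N K : N = K -> msub N K.
Proof. by move=> -> x. Qed.

Lemma sm0 N : is_submodule N -> N 0.
Proof. by case. Qed.

Lemma smD N x y : is_submodule N -> N x -> N y -> N (x + y).
Proof. by move=> [_ h] Nx Ny; rewrite -(scale1r x); apply: h. Qed.

Lemma smZ N a x : is_submodule N -> N x -> N (a *: x).
Proof. by move=> [h0 h] Nx; rewrite -(addr0 (a *: x)); apply: h. Qed.

Lemma smN N x : is_submodule N -> N x -> N (- x).
Proof. by move=> hN Nx; rewrite -scaleN1r; apply: smZ. Qed.

Lemma smB N x y : is_submodule N -> N x -> N y -> N (x - y).
Proof. by move=> hN Nx Ny; apply: smD => //; apply: smN. Qed.

Lemma sub_cyc x : is_submodule (cyc x).
Proof.
split; first by exists 0; rewrite scale0r.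
move=> a _ _ [c1 ->] [c2 ->]; exists (a * c1 + c2).
by rewrite scalerDl scalerA.
Qed.

Lemma cyc_self x : cyc x x.
Proof. by exists 1; rewrite scale1r. Qed.

Lemma cyc_in N x : is_submodule N -> N x -> msub (cyc x) N.
Proof. by move=> hN Nx _ [c ->]; apply: smZ. Qed.

Lemma cyc_nz x : x <> 0 -> nonzero_sub (cyc x).
Proof. by move=> hx; exists x; split => //; apply: cyc_self. Qed.

Lemma cap_sm N K : is_submodule N -> is_submodule K -> is_submodule (cap N K).
Proof.
move=> hN hK; split; first by split; apply: sm0.
move=> a x y [Nx Kx] [Ny Ky]; split; [case: hN => _; apply|case: hK => _; apply] => //.
Qed.

Lemma subsum_sm N K : is_submodule N -> is_submodule K -> is_submodule (subsum N K).
Proof.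
move=> hN hK; split; first by exists 0, 0; rewrite addr0; split; [apply: sm0|split => //; apply: sm0].
move=> a _ _ [n1 [k1 [N1 [K1 ->]]]] [n2 [k2 [N2 [K2 ->]]]].
exists (a *: n1 + n2), (a *: k1 + k2); split; first by case: hN => _; apply.
split; first by case: hK => _; apply.
by rewrite scalerDr addrACA.
Qed.

Lemma subsum_l N K x : is_submodule K -> N x -> subsum N K x.
Proof. by move=> hK Nx; exists x, 0; rewrite addr0; split => //; split => //; apply: sm0. Qed.

Lemma subsum_r N K x : is_submodule N -> K x -> subsum N K x.
Proof. by move=> hN Kx; exists 0, x; rewrite add0r; split => //; apply: sm0. Qed.

Lemma subsum_le N K : is_submodule N -> is_submodule K -> msub N K -> subsum N K = K.
Proof.
move=> hN hK hNK; apply: antisym; last by move=> x; apply: subsum_r.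
by move=> _ [n [k [Nn [Kk ->]]]]; apply: smD => //; apply: hNK.
Qed.

Lemma subsum_ge N K : is_submodule N -> is_submodule K -> msub K N -> subsum N K = N.
Proof.
move=> hN hK hKN; apply: antisym; last by move=> x; apply: subsum_l.
by move=> _ [n [k [Nn [Kk ->]]]]; apply: smD => //; apply: hKN.
Qed.

Lemma large_mono N (N' : M -> Prop) : large N -> msub N N' -> large N'.
Proof.
move=> hl hs L hL hnz; have [x [x0 [Nx Lx]]] := hl L hL hnz.
by exists x; split => //; split => //; apply: hs.
Qed.

Lemma nl_sub N (N' : M -> Prop) : ~ large N' -> msub N N' -> ~ large N.
Proof. by move=> h hs hl; apply: h; apply: large_mono hs. Qed.

Lemma nl_wit N : ~ large N -> exists L, is_submodule L /\ nonzero_sub L /\ meets0 L N.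
Proof.
move=> hnl; apply: NNPP => hno; apply: hnl => L hL hnz.
apply: NNPP => hx; apply: hno; exists L; split => //; split => // z Lz Nz.
apply: NNPP => z0; apply: hx; exists z; split => //.
Qed.

Lemma meets0_nl L K : is_submodule K -> nonzero_sub K -> meets0 L K -> ~ large L.
Proof.
move=> hK hnz hm hl; have [x [x0 [Lx Kx]]] := hl K hK hnz.
by apply: x0; apply: hm.
Qed.

Lemma vertex_sub N (N' : M -> Prop) : vertex N' -> is_submodule N -> nonzero_sub N -> msub N N' -> vertex N.
Proof.
move=> [_ [_ hnl]] hN hnz hs; split => //; split => //.
exact: nl_sub hs.
Qed.

Lemma adjG X Y : vertex X -> vertex Y -> msub X Y -> X <> Y -> adj X Y /\ adj Y X.
Proof.
move=> vX vY hs hne.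
have [hX _] := vX; have [hY [_ hnl]] := vY.
split; split => //; split => //; split => //.
- by rewrite subsum_le.
- by move=> e; apply: hne.
- by rewrite subsum_ge.
Qed.

Lemma C1 N x : comultiplication_module M -> is_submodule N -> ~ N x ->
  exists r, kills r N /\ r *: x <> 0.
Proof.
move=> cm hN nNx; have [I [hI eN]] := cm N hN.
rewrite eN in nNx; apply: NNPP => hno; apply: nNx => r Ir.
apply: NNPP => rx; apply: hno; exists r; split => // z.
by rewrite eN => /(_ r Ir).
Qed.

Lemma exists_minimal x : comultiplication_module M -> x <> 0 ->
  exists S', minimal_sub S' /\ msub S' (cyc x).
Proof.
move=> cm x0.
pose I := fun r : R => r *: x = 0.
have Ia : forall a b, I a -> I b -> I (a + b).
  by move=> a b; rewrite /I scalerDl => -> ->; rewrite addr0.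
have Is : forall r a, I a -> I (r * a).
  by move=> r a; rewrite /I -scalerA => ->; rewrite scaler0.
have I0 : I 0 by rewrite /I scale0r.
have I1 : ~ I 1 by rewrite /I scale1r.
have [A [AI [Aadd [Ascal [A1 Amax]]]]] := @exists_max R I Ia Is I0 I1.
have A0 : A 0 by apply: AI; rewrite /I scale0r.
pose N := fun z => exists a, A a /\ z = a *: x.
have hN : is_submodule N.
  split; first by exists 0; split => //; rewrite scale0r.
  move=> b _ _ [a1 [A1' ->]] [a2 [A2' ->]]; exists (b * a1 + a2); split.
    by apply: Aadd => //; apply: Ascal.
  by rewrite scalerDl scalerA.
have nNx : ~ N x.
  move=> [a [Aa ex]]; apply: A1.
  have -> : 1 = (1 - a) + a by rewrite subrK.
  apply: Aadd => //; apply: AI.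
  by rewrite /I scalerBl scale1r -ex subrr.
have [r [kr rx]] := @C1 N x cm hN nNx.
pose y := r *: x.
have Ay : forall c, A c -> c *: y = 0.
  by move=> c Ac; rewrite /y scalerA mulrC -scalerA; apply: kr; exists c.
exists (cyc y); split; last first.
  by move=> _ [e ->]; exists (e * r); rewrite /y scalerA.
split; first exact: sub_cyc.
split; first exact: cyc_nz.
move=> L hL [z [Lz z0]] hs.
apply: antisym => //.
apply: cyc_in => //.
have [c ez] := hs z Lz.
have nAc : ~ A c by move=> Ac; apply: z0; rewrite ez; apply: Ay.
have [d Ad] := Amax c nAc.
have -> : y = d *: z - (d * c - 1) *: y.
  have e1 : d * c - (d * c - 1) = 1 by ring.
  by rewrite ez scalerA -scalerBl e1 scale1r.
apply: smB => //; first by apply: smZ.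
by rewrite (Ay _ Ad); apply: sm0.
Qed.

End Basics.

Section Config.
Variables (R : comNzRingType) (M : lmodType R).
Implicit Types (N K L X Y : M -> Prop) (x y z : M).
Variables (cm : comultiplication_module M) (S T : M -> Prop).
Hypotheses (hS : is_submodule S) (hSnz : nonzero_sub S) (hT : vertex T)
  (hST : msub S T) (hneq : S <> T)
  (P2 : forall X, is_submodule X -> nonzero_sub X -> msub X T -> X = S \/ X = T)
  (P3 : forall X, is_submodule X -> ~ large X -> msub S X -> X = S \/ X = T).

Lemma hTs : is_submodule T. Proof. by case: hT. Qed.
Lemma hTnl : ~ large T. Proof. by case: hT => _ []. Qed.
Lemma hTnz : nonzero_sub T.
Proof. by have [s [Ss s0]] := hSnz; exists s; split => //; apply: hST. Qed.

Lemma Smin Y : is_submodule Y -> nonzero_sub Y -> msub Y S -> Y = S.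
Proof.
move=> hY hnz hs; have [//|eT] := P2 hY hnz (fun x Yx => hST (hs x Yx)).
by exfalso; apply: hneq; apply: antisym => //; rewrite -eT.
Qed.

Lemma cycS s : S s -> s <> 0 -> cyc s = S.
Proof. by move=> Ss s0; apply: Smin; [apply: sub_cyc|apply: cyc_nz|apply: cyc_in]. Qed.

Lemma killS b s : S s -> s <> 0 -> b *: s = 0 -> kills b S.
Proof.
move=> Ss s0 bs w; rewrite -(cycS Ss s0) => -[e ->].
by rewrite scalerA mulrC -scalerA bs scaler0.
Qed.

Lemma notin_meets X s : is_submodule X -> S s -> ~ X s -> meets0 X S.
Proof.
move=> hX Ss nXs z Xz Sz; apply: NNPP => z0; apply: nXs.
by apply: (cyc_in hX Xz); rewrite (cycS Sz z0).
Qed.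

Lemma hSv : vertex S.
Proof.
split => //; split => //; apply: nl_sub hST; exact: hTnl.
Qed.

Lemma Bchar X : vertex X -> X <> S -> X <> T -> meets0 X S.
Proof.
move=> [hX [hnz hnl]] nS nT.
have [sub|nsub] := classic (msub S X).
  by have [] := P3 hX hnl sub.
have [s hs] := not_all_ex_not _ _ nsub.
have [Ss nXs] := imply_to_and _ _ hs.
exact: notin_meets hX Ss nXs.
Qed.

Lemma largeXS X : is_submodule X -> nonzero_sub X -> meets0 X S -> large (subsum X S).
Proof.
move=> hX hnz hm; apply: NNPP => hnl.
have hXT : msub X T.
  have [e|e] := P3 (subsum_sm hX hS) hnl (fun s Ss => subsum_r hX Ss).
  - by move=> x Xx; apply: hST; rewrite -e; apply: subsum_l.
  - by move=> x Xx; rewrite -e; apply: subsum_l.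
have [s [Ss s0]] := hSnz.
have [e|e] := P2 hX hnz hXT; apply: s0; apply: hm => //; rewrite e //.
exact: hST.
Qed.

Lemma C1S X s : is_submodule X -> meets0 X S -> S s -> s <> 0 ->
  exists b, kills b X /\ b *: s <> 0.
Proof.
move=> hX hm Ss s0; apply: (@C1 _ _ X s cm hX) => Xs; apply: s0; exact: hm.
Qed.

Lemma meets_pair X X' : is_submodule X -> is_submodule X' -> nonzero_sub X -> nonzero_sub X' ->
  meets0 X S -> meets0 X' S -> exists z, z <> 0 /\ X z /\ X' z.
Proof.
move=> hX hX' nX nX' mX mX'.
have [x' [x0 [[x [s [Xx [Ss ex]]]] X'x']]] := largeXS hX nX mX hX' nX'.
have [s0|s0] := classic (s = 0).
  by exists x'; split => //; split => //; rewrite ex s0 addr0.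
have [b [kb bs]] := C1S hX mX Ss s0.
exfalso; apply: bs; apply: mX'.
  have -> : b *: s = b *: x' by rewrite ex scalerDr (kb x Xx) add0r.
  exact: smZ.
exact: smZ.
Qed.

Lemma sum_meets0 X Y : is_submodule X -> is_submodule Y -> meets0 X S -> meets0 Y S ->
  meets0 (subsum X Y) S.
Proof.
move=> hX hY mX mY _ [x [y [Xx [Yy ->]]]] Sz.
apply: NNPP => z0.
have [b [kb bz]] := C1S hX mX Sz z0.
have Sbz : S (b *: (x + y)) by apply: smZ.
have [b' [kb' bbz]] := C1S hY mY Sbz bz.
apply: bbz; rewrite scalerDr (kb x Xx) add0r scalerA mulrC -scalerA (kb' y Yy).
by rewrite scaler0.
Qed.

Lemma no_cross K : vertex K -> K <> S -> K <> T -> ~ adj S K /\ ~ adj T K.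
Proof.
move=> vK nS nT; have [hK [nzK _]] := vK.
have gen : forall N, is_submodule N -> msub S N -> adj N K -> False.
  move=> N hN SN [_ [_ [_ hnl]]].
  have hsub := subsum_sm hN hK.
  have KT : msub K T.
    have [e|e] := P3 hsub hnl (fun s Ss => subsum_l hK (SN s Ss)).
    - by move=> x Kx; apply: hST; rewrite -e; apply: subsum_r.
    - by move=> x Kx; rewrite -e; apply: subsum_r.
  by have [] := P2 hK nzK KT.
split => hadj; first exact: (gen S hS (fun x h => h) hadj).
exact: (gen T hTs hST hadj).
Qed.

Lemma config_concl : two_minimal M /\ two_complete_components M.
Proof.
have [L [hL [nzL mLT]]] := nl_wit hTnl.
have [s0 [Ss0 s00]] := hSnz.
have mLS : meets0 L S by move=> z Lz Sz; apply: mLT => //; apply: hST.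
have vL : vertex L by split => //; split => //; apply: meets0_nl mLT; [exact: hTs|exact: hTnz].
have LnS : L <> S by move=> e; apply: s00; apply: mLS => //; rewrite e.
have LnT : L <> T by move=> e; apply: s00; apply: mLT; [rewrite e|]; apply: hST.
split.
  have [x [Lx x0]] := nzL.
  have [S' [minS' subS']] := exists_minimal cm x0.
  have S'L : msub S' L by move=> z /subS'; apply: cyc_in.
  have mS' : meets0 S' S by move=> z /S'L; apply: mLS.
  have [hS' [nzS' minS'p]] := minS'.
  exists S, S'; split.
    by move=> e; apply: s00; apply: mS' => //; rewrite -e.
  split; first by split => //; split => // Y hY nY sY; apply: Smin.
  split => // N [hN [nzN minN]].
  have [[z [z0 [Nz Sz]]]|nm] := classic (exists z, z <> 0 /\ N z /\ S z).
    left; have hc := cap_sm hN hS.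
    have nzc : nonzero_sub (cap N S) by exists z.
    have e1 := minN _ hc nzc (fun w => @proj1 _ _).
    have e2 := Smin hc nzc (fun w => @proj2 _ _).
    by rewrite -e1 e2.
  have mN : meets0 N S.
    move=> z Nz Sz; apply: NNPP => z0; apply: nm; exists z; split => //.
  right; have [z [z0 [Nz S'z]]] := meets_pair hN hS' nzN nzS' mN mS'.
  have hc := cap_sm hN hS'.
  have nzc : nonzero_sub (cap N S') by exists z.
  have e1 := minN _ hc nzc (fun w => @proj1 _ _).
  have e2 := minS'p _ hc nzc (fun w => @proj2 _ _).
  by rewrite -e1 e2.
exists (fun N => N = S \/ N = T), (fun N => vertex N /\ N <> S /\ N <> T).
split.
  move=> N; split.
    move=> vN; have [eS|nS] := classic (N = S); first by left; left.
    have [eT|nT] := classic (N = T); first by left; right.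
    by right.
  move=> [[->|->]|[? _]] //; exact: hSv.
split.
  by move=> N [[->|->] [_ []]].
split; first by exists S; left.
split; first by exists L.
split.
  move=> N K [->|->] [->|->] ne //.
  - by have [] := adjG hSv hT hST hneq.
  - by have [] := adjG hSv hT hST hneq.
split.
  move=> N K [vN [nS nT]] [vK [kS kT]] ne.
  have [hN [nzN _]] := vN; have [hK [nzK _]] := vK.
  split => //; split => //; split => //.
  apply: (meets0_nl hS hSnz).
  by apply: sum_meets0 => //; apply: Bchar.
split.
  move=> N K [->|->] [vK [kS kT]]; have [h1 h2] := no_cross vK kS kT => //.
left; exists S, T; split => //.
Qed.

End Config.

Section Main.
Variables (R : comNzRingType) (M : lmodType R).
Implicit Types (N K L X Y : M -> Prop) (x y z : M).

Lemma subsumC N K : subsum N K = subsum K N.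
Proof.
by apply: pred_ext => x; split => -[a [b [Na [Kb ->]]]]; exists b, a; rewrite addrC.
Qed.

Lemma adj_sym N K : adj N K -> adj K N.
Proof.
by move=> [vN [vK [ne nl]]]; split => //; split => //; split; [move=> e; apply: ne|rewrite subsumC].
Qed.

Lemma not_star : ~ star_graph M.
Proof.
move=> [c [vc [hadj hedge]]]; have [hc [nzc nlc]] := vc.
have [L [hL [nzL mLc]]] := nl_wit nlc.
have vL : vertex L by split => //; split => //; apply: meets0_nl mLc.
have [x [Lx x0]] := nzL; have [w [cw w0]] := nzc.
have Lnc : L <> c by move=> e; apply: x0; apply: mLc => //; rewrite -e.
have [_ [_ [_ nlW]]] := hadj L vL (fun e => Lnc e).
have hW := subsum_sm hc hL.
have [e1|n1] := classic (subsum c L = c).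
  by apply: x0; apply: mLc => //; rewrite -e1; apply: subsum_r.
have [e2|n2] := classic (subsum c L = L).
  by apply: w0; apply: mLc => //; rewrite -e2; apply: subsum_l.
have vW : vertex (subsum c L).
  by split => //; split => //; exists x; split => //; apply: subsum_r.
have [a _] := adjG vL vW (fun z Lz => subsum_r hc Lz) (fun e => n2 (esym e)).
by have [] := hedge _ _ a.
Qed.

Lemma pendant_back : two_complete_components M -> has_pendent_vertex M.
Proof.
move=> [A [B [part [disj [_ [_ [cA [cB [cross ex2]]]]]]]]].
case: ex2 => -[N1 [N2 [ne h]]].
- have aN1 : A N1 by apply/h; left.
  have aN2 : A N2 by apply/h; right.
  exists N1; split; first by apply/part; left.
  exists N2; split; first exact: cA.
  move=> w a; have [_ [vw [nw _]]] := a.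
  have [Aw|Bw] := (proj1 (part w)) vw; last by exfalso; apply: (cross N1 w).
  by have [e|//] := (proj1 (h w)) Aw; exfalso; apply: nw.
- have aN1 : B N1 by apply/h; left.
  have aN2 : B N2 by apply/h; right.
  exists N1; split; first by apply/part; right.
  exists N2; split; first exact: cB.
  move=> w a; have [_ [vw [nw _]]] := a.
  have [Aw|Bw] := (proj1 (part w)) vw; first by exfalso; apply: (cross w N1) => //; apply: adj_sym.
  by have [e|//] := (proj1 (h w)) Bw; exfalso; apply: nw.
Qed.

End Main.

Section Pendant.
Variables (R : comNzRingType) (M : lmodType R).
Implicit Types (N K L X Y : M -> Prop) (x y z : M).
Variable cm : comultiplication_module M.

Lemma not_sub_ex N K : ~ msub N K -> exists s, N s /\ ~ K s.
Proof.
move=> h; have [s hs] := not_all_ex_not _ _ h.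
by exists s; apply: imply_to_and.
Qed.

Lemma caseA S T : vertex S -> vertex T -> msub S T -> S <> T ->
  (forall w : M -> Prop, adj S w -> w = T) -> two_minimal M /\ two_complete_components M.
Proof.
move=> vS vT ST nST uniq.
have [hS [nzS nlS]] := vS; have [hT [nzT nlT]] := vT.
have P3 : forall X, is_submodule X -> ~ large X -> msub S X -> X = S \/ X = T.
  move=> X hX nlX SX; have [e|ne] := classic (X = S); first by left.
  right; have [s [Ss s0]] := nzS.
  have vX : vertex X by split => //; split => //; exists s; split => //; apply: SX.
  have [a _] := adjG vS vX SX (fun e => ne (esym e)).
  exact: uniq.
have Smin : forall Y, is_submodule Y -> nonzero_sub Y -> msub Y S -> Y = S.
  move=> Y hY nzY YS; apply: NNPP => ne.
  have vY := vertex_sub vS hY nzY YS.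
  have [_ a] := adjG vY vS YS ne.
  have eY := uniq _ a; apply: nST; apply: antisym => //; rewrite -eY.
  done.
have P2 : forall X, is_submodule X -> nonzero_sub X -> msub X T -> X = S \/ X = T.
  move=> X hX nzX XT; apply: NNPP => hno.
  have nlX : ~ large X := nl_sub nlT XT.
  have [SX|nSX] := classic (msub S X).
    by apply: hno; apply: P3.
  have [s [Ss nXs]] := not_sub_ex nSX.
  have mXS : meets0 X S.
    move=> z Xz Sz; apply: NNPP => z0; apply: nXs.
    by apply: (cyc_in hX Xz); rewrite (Smin _ (sub_cyc z) (cyc_nz z0) (cyc_in hS Sz)).
  have [L [hL [nzL mLT]]] := nl_wit nlT.
  have lLS : large (subsum L S).
    apply: NNPP => nl.
    have LT : msub L T.
      have [e|e] := P3 _ (subsum_sm hL hS) nl (fun z Sz => subsum_r hL Sz).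
      - by move=> z Lz; apply: ST; rewrite -e; apply: subsum_l.
      - by move=> z Lz; rewrite -e; apply: subsum_l.
    have [z [Lz z0]] := nzL; by apply: z0; apply: mLT => //; apply: LT.
  have [x [x0 [[l [s' [Ll [Ss' ex]]]] Xx]]] := lLS X hX nzX.
  have l0 : l = 0.
    apply: mLT => //.
    have -> : l = x - s' by rewrite ex addrK.
    by apply: smB => //; [apply: XT|apply: ST].
  by apply: x0; rewrite ex l0 add0r; apply: mXS => //; rewrite -(add0r s') -l0 -ex.
exact: (config_concl cm hS nzS vT ST nST P2 P3).
Qed.

Lemma caseB S T : vertex S -> vertex T -> msub S T -> S <> T ->
  (forall w : M -> Prop, adj T w -> w = S) -> two_minimal M /\ two_complete_components M.
Proof.
move=> vS vT ST nST uniq.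
have [hS [nzS nlS]] := vS; have [hT [nzT nlT]] := vT.
have [s0 [Ss0 s00]] := nzS.
have Q : forall X, is_submodule X -> ~ large X -> msub T X -> X = T.
  move=> X hX nlX TX; apply: NNPP => ne.
  have vX : vertex X by split => //; split => //; exists s0; split => //; apply: TX; apply: ST.
  have [a _] := adjG vT vX TX (fun e => ne (esym e)).
  have eX := uniq _ a; apply: nST; apply: antisym => //; rewrite -eX.
  done.
have P2 : forall X, is_submodule X -> nonzero_sub X -> msub X T -> X = S \/ X = T.
  move=> X hX nzX XT; have [e|ne] := classic (X = T); first by right.
  left; have vX := vertex_sub vT hX nzX XT.
  have [_ a] := adjG vX vT XT ne.
  exact: uniq.
have Smin : forall Y, is_submodule Y -> nonzero_sub Y -> msub Y S -> Y = S.
  move=> Y hY nzY YS; have [//|e] := P2 Y hY nzY (fun z Yz => ST z (YS z Yz)).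
  by exfalso; apply: nST; apply: antisym => //; rewrite -e.
have aT : forall a, kills a S -> forall t, T t -> S (a *: t).
  move=> a ka t Tt; apply: NNPP => nu.
  have z0 : a *: t <> 0 by move=> e; apply: nu; rewrite e; apply: sm0.
  have [e|e] := P2 _ (sub_cyc (a *: t)) (cyc_nz z0) (cyc_in hT (smZ a hT Tt)).
    by apply: nu; rewrite -e; apply: cyc_self.
  have Ts0 : cyc (a *: t) s0 by rewrite e; apply: ST.
  have Tt' : cyc (a *: t) t by rewrite e.
  have [e1 es0] := Ts0; have [d et] := Tt'.
  apply: s00.
  have -> : s0 = d *: (a *: s0).
    rewrite {1}es0 {1}et !scalerA es0 !scalerA; congr (_ *: _); ring.
  by rewrite (ka s0 Ss0) scaler0.
have P3 : forall X, is_submodule X -> ~ large X -> msub S X -> X = S \/ X = T.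
  move=> Y hY nlY SY; apply: NNPP => hno.
  have nTY : ~ msub T Y by move=> TY; apply: hno; right; apply: Q.
  have YT : forall z, Y z -> T z -> S z.
    move=> z Yz Tz.
    have hc := cap_sm hY hT.
    have nzc : nonzero_sub (cap Y T) by exists s0; split => //; split; [apply: SY|apply: ST].
    have [e|e] := P2 _ hc nzc (fun w => @proj2 _ _).
      by rewrite -e.
    by exfalso; apply: nTY => w Tw; have [] : cap Y T w by rewrite e.
  have lYT : large (subsum Y T).
    apply: NNPP => nl.
    have e := Q _ (subsum_sm hY hT) nl (fun z Tz => subsum_r hY Tz).
    have YT' : msub Y T by move=> z Yz; rewrite -e; apply: subsum_l.
    have nzY : nonzero_sub Y by exists s0; split => //; apply: SY.
    by apply: hno; apply: P2.
  have [K [hK [nzK mKY]]] := nl_wit nlY.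
  have [k [k0 [[y [t [Yy [Tt ek]]]] Kk]]] := lYT K hK nzK.
  have nKs0 : ~ K s0 by move=> Ks0; apply: s00; apply: mKY => //; apply: SY.
  have [b [kb bs0]] := C1 cm hK nKs0.
  have ebt : b *: t = - (b *: y).
    by apply/eqP; rewrite -addr_eq0 addrC -scalerDr -ek (kb k Kk).
  have Sbt : S (b *: t).
    apply: YT; last by apply: smZ.
    by rewrite ebt; apply: smN => //; apply: smZ.
  have Sbs0 : S (b *: s0) by apply: smZ.
  have cS : cyc (b *: s0) = S := Smin _ (sub_cyc _) (cyc_nz bs0) (cyc_in hS Sbs0).
  have [c ec] : cyc (b *: s0) s0 by rewrite cS.
  pose a := c * b - 1.
  have as0 : a *: s0 = 0.
    by rewrite /a scalerBl scale1r -scalerA -ec subrr.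
  have ka : kills a S.
    move=> w Sw; have cS0 : cyc s0 = S := Smin _ (sub_cyc _) (cyc_nz s00) (cyc_in hS Ss0).
    have [f ->] : cyc s0 w by rewrite cS0.
    by rewrite scalerA mulrC -scalerA as0 scaler0.
  have St : S t.
    have -> : t = c *: (b *: t) - a *: t.
      by rewrite scalerA -scalerBl /a (_ : c * b - (c * b - 1) = 1) ?scale1r //; ring.
    by apply: smB => //; [apply: smZ|apply: aT].
  by apply: k0; apply: mKY => //; rewrite ek; apply: smD => //; apply: SY.
exact: (config_concl cm hS nzS vT ST nST P2 P3).
Qed.

Lemma pendant_fwd : has_pendent_vertex M -> two_minimal M /\ two_complete_components M.
Proof.
move=> [v [vv [u [adjvu uniq]]]].
have [_ [vu [nvu nlW]]] := adjvu.
have [hv [nzv nlv]] := vv; have [hu [nzu nlu]] := vu.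
have hW := subsum_sm hv hu.
have [eW|nW] := classic (subsum v u = v).
  have uv : msub u v by move=> x ux; rewrite -eW; apply: subsum_r.
  exact: (caseB vu vv uv (fun e => nvu (esym e)) uniq).
have vW : vertex (subsum v u).
  by split => //; split => //; have [x [vx x0]] := nzv; exists x; split => //; apply: subsum_l.
have [a _] := adjG vv vW (fun z vz => subsum_l hu vz) (fun e => nW (esym e)).
have eW := uniq _ a.
have vu' : msub v u by move=> x vx; rewrite -eW; apply: subsum_l.
exact: (caseA vv vu vu' nvu uniq).
Qed.

End Pendant.

Theorem theorem2p12 (R : comNzRingType) (M : lmodType R) :
  comultiplication_module M ->
  (exists x : M, x <> 0) ->
  non_null M ->
  (has_pendent_vertex M <-> (two_minimal M /\ two_complete_components M)) /\
  ~ star_graph M.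
Proof.
move=> cm _ _; split; last exact: not_star.
split; first exact: pendant_fwd.
by move=> [_ h]; apply: pendant_back.
Qed.
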